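(* Let $F$ be a field with $\mathrm{char}\,F\neq 2$, let $n\ge 1$, and let $\lambda\in F$ be nonzero. Let $I_n$ be the $F$-algebra defined in the context. Then every Rota--Baxter operator $R$ of weight $\lambda$ on $I_n$ is splitting: there exist subalgebras $A_1,A_2$ of $I_n$ with $I_n=A_1\oplus A_2$ as vector spaces such that $R(a_1+a_2)=-\lambda a_2$ for all $a_1\in A_1$, $a_2\in A_2$.
   Context: $I_n$ denotes the $n$-dimensional (non-associative) algebra over $F$ with basis $e_1,\ldots,e_n$ and multiplication given by $e_n\cdot e_n=2e_n$, $e_n\cdot e_j=e_j$, $e_j\cdot e_j=e_n$ for $j=1,\ldots,n-1$, with all other products of basis elements equal to zero (extended bilinearly). A linear operator $R\colon A\to A$ on an algebra $A$ is a Rota--Baxter operator of weight $\lambda\in F$ if $R(x)R(y)=R(R(x)y+xR(y)+\lambda xy)$ for all $x,y\in A$. *)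

(* Defs.v *)
From HB Require Import structures.
From mathcomp Require Import all_boot all_order all_algebra.
Set Implicit Arguments. Unset Strict Implicit. Unset Printing Implicit Defensive.
Import GRing.Theory.
Local Open Scope ring_scope.

(* The algebra I_n has carrier F^n = 'rV[F]_n with basis e_1..e_n given by
   delta_mx 0 i, i : 'I_n; the paper's index j in 1..n is i+1, so the
   distinguished basis vector e_n is the one with index n.-1. *)

Definition In_basis (F : fieldType) (n : nat) (i : 'I_n) : 'rV[F]_n :=
  delta_mx 0 i.

Definition In_is_last (n : nat) (i : 'I_n) : bool := (i : nat) == n.-1.

Definition In_en (F : fieldType) (n : nat) : 'rV[F]_n :=
  \row_(k < n) (In_is_last k)%:R.

Definition In_basis_mul (F : fieldType) (n : nat) (i j : 'I_n) : 'rV[F]_n :=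
  if In_is_last i then
    (if In_is_last j then 2%:R *: In_en F n else In_basis F j)
  else if (~~ In_is_last j) && (i == j) then In_en F n
  else 0.

Definition In_mul {F : fieldType} {n : nat} (x y : 'rV[F]_n) : 'rV[F]_n :=
  \sum_(i < n) \sum_(j < n) (x 0 i * y 0 j) *: @In_basis_mul F n i j.

Definition is_subalgebra (F : fieldType) (n : nat) (A : {vspace 'rV[F]_n}) :=
  forall x y, x \in A -> y \in A -> In_mul x y \in A.

Definition is_RB_operator (F : fieldType) (n : nat) (lam : F)
  (R : 'rV[F]_n -> 'rV[F]_n) :=
  linear R /\
  forall x y, In_mul (R x) (R y) =
              R (In_mul (R x) y + In_mul x (R y) + lam *: In_mul x y).

(* Main.v *)
Require Import Defs.
From HB Require Import structures.
From mathcomp Require Import all_boot all_order all_algebra.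
From mathcomp Require Import ring.
Import GRing.Theory.
Local Open Scope ring_scope.

Section S.
Variables (F : fieldType) (m : nat).
Local Notation V := 'rV[F]_m.+1.
Definition ip (x y : V) : F := \sum_i x 0 i * y 0 i.
Definition eps (x : V) : F := x 0 ord_max.
Definition ee : V := delta_mx 0 ord_max.

Lemma ee_entry k : ee 0 k = (k == ord_max)%:R.
Proof. by rewrite /ee mxE eqxx. Qed.

Lemma lastE (k : 'I_m.+1) : In_is_last k = (k == ord_max). Proof. by []. Qed.
Lemma bmulE (i j : 'I_m.+1) : In_basis_mul F i j =
  (i == ord_max)%:R *: delta_mx 0 j + (i == j)%:R *: ee.
Proof.
apply/rowP => k; rewrite /In_basis_mul /In_basis /In_en !lastE.
case: (eqVneq i ord_max) => [->|Hio]; case: (eqVneq j ord_max) => [->|Hjo] /=;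
  rewrite ?eqxx /=.
all: try (case: (eqVneq i j) => [Hij|Hij]; rewrite /=).
all: rewrite !mxE ?lastE /= ?eqxx /=.
all: try (case: (eqVneq k ord_max) => [->|Hko]; rewrite ?eqxx /=).
all: try (case: (eqVneq k j) => [->|Hkj]; rewrite ?eqxx /=).
all: (try rewrite (negbTE Hio)); rewrite ?mul0r ?mul1r ?add0r ?addr0 ?mulr0 /=; try ring.

Qed.

Lemma mulE (x y : V) : In_mul x y = eps x *: y + ip x y *: ee.
Proof.
rewrite /In_mul.
transitivity (\sum_i ((x 0 i * (i == ord_max)%:R) *: y) + \sum_i ((x 0 i * y 0 i) *: ee)).
  rewrite -big_split /=; apply: eq_bigr => i _.
  have -> : (x 0 i * (i == ord_max)%:R) *: y =
     \sum_j (x 0 i * y 0 j * (i == ord_max)%:R) *: delta_mx 0 j.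
    rewrite {1}(row_sum_delta y) scaler_sumr; apply: eq_bigr => j _.
    by rewrite scalerA mulrAC.
  have -> : (x 0 i * y 0 i) *: ee = \sum_j (x 0 i * y 0 j * (i == j)%:R) *: ee.
    rewrite (bigD1 i) //= eqxx mulr1 big1 ?addr0 // => j Hj.
    by rewrite eq_sym (negbTE Hj) mulr0 scale0r.
  rewrite -big_split; apply: eq_bigr => j _; rewrite bmulE scalerDr !scalerA.
  by [].
rewrite -!scaler_suml; congr (_ *: _ + _).
rewrite (bigD1 ord_max) //= eqxx mulr1 big1 ?addr0 // => j Hj.
by rewrite (negbTE Hj) mulr0.
Qed.

Lemma ip_sym x y : ip x y = ip y x.
Proof. by apply: eq_bigr => i _; rewrite mulrC. Qed.
Lemma ip_ee_r x : ip x ee = eps x.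
Proof.
rewrite /ip (bigD1 ord_max) //= ee_entry eqxx mulr1 big1 ?addr0 // => i Hi.
by rewrite ee_entry (negbTE Hi) mulr0.
Qed.
Lemma ip_ee_l x : ip ee x = eps x.
Proof. by rewrite ip_sym ip_ee_r. Qed.
Lemma ip_delta_r x k : ip x (delta_mx 0 k) = x 0 k.
Proof.
rewrite /ip (bigD1 k) //= mxE !eqxx mulr1 big1 ?addr0 // => i Hi.
by rewrite mxE (negbTE Hi) andbF mulr0.
Qed.
Lemma ipZl a x y : ip (a *: x) y = a * ip x y.
Proof. by rewrite /ip mulr_sumr; apply: eq_bigr => i _; rewrite mxE mulrA. Qed.
Lemma ipZr a x y : ip x (a *: y) = a * ip x y.
Proof. by rewrite ip_sym ipZl ip_sym. Qed.
Lemma eps_ee : eps ee = 1.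
Proof. by rewrite /eps ee_entry eqxx. Qed.
Lemma eps_delta k : eps (delta_mx 0 k) = ee 0 k.
Proof. by rewrite /eps /ee !mxE eq_sym. Qed.

Lemma eD (u v : V) k : (u + v) 0 k = u 0 k + v 0 k :> F.
Proof. by rewrite mxE. Qed.
Lemma eZ a (u : V) k : (a *: u) 0 k = a * u 0 k :> F.
Proof. by rewrite mxE. Qed.
Lemma eN (u : V) k : (- u) 0 k = - u 0 k :> F.
Proof. by rewrite mxE. Qed.
Lemma e0 k : (0 : V) 0 k = 0 :> F.
Proof. by rewrite mxE. Qed.

Lemma lcf1 (l r c1 a1 b1 : F) : a1 = b1 -> l - r = c1 * (a1 - b1) -> l = r.
Proof. by move=> -> /eqP; rewrite subrr mulr0 subr_eq0 => /eqP. Qed.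
Lemma lcf2 (l r c1 a1 b1 c2 a2 b2 : F) : a1 = b1 -> a2 = b2 ->
  l - r = c1 * (a1 - b1) + c2 * (a2 - b2) -> l = r.
Proof. by move=> -> -> /eqP; rewrite !subrr !mulr0 addr0 subr_eq0 => /eqP. Qed.
Lemma lcf4 (l r c1 a1 b1 c2 a2 b2 c3 a3 b3 c4 a4 b4 : F) : a1 = b1 -> a2 = b2 ->
  a3 = b3 -> a4 = b4 ->
  l - r = c1 * (a1 - b1) + c2 * (a2 - b2) + c3 * (a3 - b3) + c4 * (a4 - b4) -> l = r.
Proof. by move=> -> -> -> -> /eqP; rewrite !subrr !mulr0 !addr0 subr_eq0 => /eqP. Qed.
Ltac atomize := repeat match goal with
 | |- context [@fun_of_matrix ?T ?a ?b ?u ?i ?j] =>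
     let z := fresh "z" in set z := (@fun_of_matrix T a b u i j) in *; clearbody z
 | H : context [@fun_of_matrix ?T ?a ?b ?u ?i ?j] |- _ =>
     let z := fresh "z" in set z := (@fun_of_matrix T a b u i j) in *; clearbody z
 | |- context [ip ?u ?v] =>
     let z := fresh "z" in set z := (ip u v) in *; clearbody z
 | H : context [ip ?u ?v] |- _ =>
     let z := fresh "z" in set z := (ip u v) in *; clearbody z
 | |- context [eps ?u] =>
     let z := fresh "z" in set z := (eps u) in *; clearbody z
 | H : context [eps ?u] |- _ =>
     let z := fresh "z" in set z := (eps u) in *; clearbody z
 end.
Ltac lc1 H1 c1 := atomize; apply: (@lcf1 _ _ c1 _ _ H1); ring.
Ltac lc2 H1 c1 H2 c2 := atomize; apply: (@lcf2 _ _ c1 _ _ c2 _ _ H1 H2); ring.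
Ltac lc4 H1 c1 H2 c2 H3 c3 H4 c4 :=
  atomize; apply: (@lcf4 _ _ c1 _ _ c2 _ _ c3 _ _ c4 _ _ H1 H2 H3 H4); ring.

Section Main.
Variables (R : {linear V -> V}) (lam : F).
Hypothesis two : (2%:R : F) != 0.
Hypothesis RB : forall x y, In_mul (R x) (R y) =
              R (In_mul (R x) y + In_mul x (R y) + lam *: In_mul x y).

Lemma K x y : ip (R x) (R y) *: ee =
  (ip (R x) y + ip x (R y) + lam * ip x y) *: R ee + eps x *: (R (R y) + lam *: R y).
Proof.
have H := RB x y; rewrite !mulE !linearD !linearZ /= in H.
apply/rowP => k; move/rowP/(_ k): H; rewrite !eD !eZ => H.
rewrite ?mxE in H *. lc1 H (1 : F).
Qed.

Definition dd := R (R ee) + lam *: R ee.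

Lemma Dlin y : R (R y) + lam *: R y = eps y *: dd.
Proof.
have K1 := K ee y; have K2 := K y ee.
rewrite (ip_sym (R y) (R ee)) (ip_sym y (R ee)) !ip_ee_r !ip_ee_l eps_ee in K1 K2.
apply/rowP => k; move/rowP/(_ k): K1; move/rowP/(_ k): K2; rewrite /dd !eD !eZ => K2 K1.
rewrite ?mxE in K1 K2 *.
lc2 K1 (-1 : F) K2 (1 : F).
Qed.

Lemma RD y : eps y *: R dd = eps (R y) *: dd.
Proof.
have h1 := Dlin (R y).
have h2 := congr1 R (Dlin y); rewrite /= linearD !linearZ /= in h2.
exact: (etrans (esym h2) h1).
Qed.

Lemma Rdd : R dd = eps (R ee) *: dd.
Proof. by have := RD ee; rewrite eps_ee scale1r. Qed.

Lemma RR x : R (R x) = - lam *: R x.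
Proof.
case: (eqVneq dd 0) => [d0|dn0].
  have := Dlin x; rewrite d0 scaler0 => /eqP; rewrite addr_eq0 => /eqP ->.
  by rewrite scaleNr.
exfalso.
have S3 : forall y, eps (R y) = eps (R ee) * eps y.
  move=> y; have : (eps y * eps (R ee) - eps (R y)) *: dd = 0.
    by rewrite scalerBl -scalerA -Rdd RD subrr.
  move/eqP; rewrite scaler_eq0 (negbTE dn0) orbF subr_eq0 => /eqP <-.
  by rewrite mulrC.
set mu := eps (R ee) in S3 *.
have S5 : forall y k, (ip (R ee) y - mu * eps y) * (mu * ee 0 k - R ee 0 k) = 0.
  move=> y k.
  have E1 := K ee y; have E3 := K ee ee.
  rewrite !Dlin in E1 E3.
  rewrite ?ip_ee_l ?ip_ee_r ?S3 ?eps_ee ?mulr1 ?scale1r in E1 E3.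
  rewrite /dd in E1 E3.
  have E1k := congr1 (fun v : V => v 0 k) E1.
  have E1m := congr1 (fun v : V => v 0 ord_max) E1.
  have E3k := congr1 (fun v : V => v 0 k) E3.
  have E3m := congr1 (fun v : V => v 0 ord_max) E3.
  have Rm : R ee 0 ord_max = mu by [].
  rewrite /= ?eD ?eZ ?ee_entry ?mxE ?eqxx /= ?Rm in E1k E1m E3k E3m.
  rewrite ee_entry.
  lc4 E1k (1 : F) E1m (- (k == ord_max)%:R : F) E3k (- eps y) E3m (eps y * (k == ord_max)%:R).
have Re : R ee = mu *: ee.
  apply/rowP => k; have := S5 (delta_mx 0 k) k; rewrite ip_delta_r eps_delta => H.
  have : (R ee 0 k - mu * ee 0 k) ^+ 2 = 0 by lc1 H (-1 : F).
  move/eqP; rewrite expf_eq0 /= subr_eq0 => /eqP ->.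
  by rewrite [RHS]mxE.
have ddE : dd = (mu * mu + lam * mu) *: ee.
  by rewrite /dd Re linearZ /= Re !scalerA scalerDl.
have E3 := K ee ee.
rewrite Dlin eps_ee scale1r ddE Re !ipZl !ipZr ip_ee_r eps_ee in E3.
have E3m := congr1 (fun v : V => v 0 ord_max) E3.
rewrite /= ?eD ?eZ ?ee_entry ?mxE ?eqxx /= in E3m.
have : (mu * mu + lam * mu) * 2%:R = 0 by lc1 E3m (-1 : F).
move/eqP; rewrite mulf_eq0 (negbTE two) orbF => /eqP c0.
by move: dn0; rewrite ddE c0 scale0r eqxx.
Qed.
End Main.
Lemma eps0 : eps 0 = 0. Proof. by rewrite /eps mxE. Qed.
Lemma ip0r x : ip x 0 = 0.
Proof. by rewrite /ip big1 // => i _; rewrite mxE mulr0. Qed.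
Lemma mul0r_In (x : V) : In_mul 0 x = 0.
Proof. by rewrite mulE eps0 ip_sym ip0r !scale0r addr0. Qed.
Lemma mulr0_In (x : V) : In_mul x 0 = 0.
Proof. by rewrite mulE ip0r !scaler0 scale0r addr0. Qed.
End S.

Theorem corollary1 (F : fieldType) (n : nat) (lam : F)
  (R : 'rV[F]_n -> 'rV[F]_n) :
  (2%:R : F) != 0 -> (1 <= n)%N -> lam != 0 ->
  is_RB_operator lam R ->
  exists A1 A2 : {vspace 'rV[F]_n},
    [/\ is_subalgebra A1, is_subalgebra A2,
        (A1 + A2 = fullv)%VS, (A1 :&: A2 = 0)%VS &
        forall a1 a2, a1 \in A1 -> a2 \in A2 -> R (a1 + a2) = - lam *: a2].
Proof.
move=> two n1 lam0 [HR RB].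
case: n R HR RB n1 => [//|m] R HR RB _.
pose Rl : {linear 'rV[F]_m.+1 -> 'rV[F]_m.+1} :=
  HB.pack R (GRing.isLinear.Build F _ _ *:%R R HR).
have RBl : forall x y, In_mul (Rl x) (Rl y) =
   Rl (In_mul (Rl x) y + In_mul x (Rl y) + lam *: In_mul x y) := RB.
have RRl := @RR _ _ Rl lam two RBl.
have RR' : forall x, R (R x) = - lam *: R x := RRl.
pose f := linfun Rl.
have fE : forall v, f v = Rl v by move=> v; rewrite lfunE.
exists (lker f), (limg f); split.
- move=> x y; rewrite !memv_ker !fE => /eqP Rx /eqP Ry.
  have := RBl x y; rewrite Rx Ry !mul0r_In !mulr0_In !add0r linearZ /=.
  move/esym/eqP; rewrite scaler_eq0 (negbTE lam0) /= => /eqP ->.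
  by [].
- move=> x y /memv_imgP [u _ ->] /memv_imgP [v _ ->]; rewrite !fE RBl -fE.
  exact: memv_img (memvf _).
- apply/eqP; rewrite eqEsubv subvf /=; apply/subvP => v _.
  have -> : v = (v + lam^-1 *: Rl v) + f (- lam^-1 *: v).
    by rewrite fE linearZ /= scaleNr addrK.
  apply: memv_add; last exact: memv_img (memvf _).
  rewrite memv_ker fE linearD linearZ /= RR' scalerA mulrN mulVf // scaleN1r.
  by rewrite subrr.
- apply/eqP; rewrite -subv0; apply/subvP => v; rewrite memv_cap memv0.
  case/andP => Hk /memv_imgP [u _ Hv]; move: Hk; rewrite Hv memv_ker !fE RRl.
  by rewrite scaler_eq0 oppr_eq0 (negbTE lam0).
- move=> a1 a2; rewrite memv_ker fE => /eqP Ra1 /memv_imgP [u _ ->].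
  rewrite fE; change (R (a1 + R u) = - lam *: R u).
  have HD : R (a1 + R u) = R a1 + R (R u) := linearD Rl a1 (Rl u).
  by rewrite HD (Ra1 : R a1 = 0) add0r RR'.
Qed.
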